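(* Let $\alpha\in(0,1)$ be irrational and let $w\in W_\alpha$. Then there exist $t\in\mathbb{N}$, a (possibly empty) suffix $x$ of $s_t$ or of $s_{t-1}$, and a (possibly empty) prefix $y$ of $s_{t+1}$ such that $w=xy$.
   Context: Let $\alpha=[a_1,a_2,\dots]$ be the continued fraction expansion of $\alpha$. Define words over $\{0,1\}$ by $s_{-1}=1$, $s_0=0$, $s_1=s_0^{a_1-1}s_{-1}$, $s_n=s_{n-1}^{a_n}s_{n-2}$ for $n\ge2$. For $\theta\in[0,1)$, $v_{\alpha,\theta}$ is the two-sided infinite word with letters $v_{\alpha,\theta}(n)=\chi_{[1-\alpha,1)}(n\alpha+\theta\bmod1)$, $n\in\mathbb{Z}$; $W_\alpha$ is the set of all finite non-empty subwords of the words $v_{\alpha,\theta}$, $\theta\in[0,1)$. $\mathbb{N}=\{1,2,\dots\}$. *)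

(* Defs.v *)
From Stdlib Require Import Reals ZArith List.
Open Scope R_scope.

Definition irrational (x : R) : Prop :=
  ~ exists p q : Z, q <> 0%Z /\ x = IZR p / IZR q.

Fixpoint cf_rem (alpha : R) (n : nat) : R :=
  match n with
  | O => alpha
  | S k => frac_part (/ cf_rem alpha k)
  end.

(* partial quotients: cf_a alpha k = a_k for k >= 1 (alpha = [0; a_1, a_2, ...]) *)
Definition cf_a (alpha : R) (k : nat) : nat :=
  match k with
  | O => 0%nat
  | S j => Z.to_nat (Int_part (/ cf_rem alpha j))
  end.

Definition wpow (u : list nat) (n : nat) : list nat := concat (repeat u n).

(* sw_pair alpha n = (s_n, s_{n+1}), with s_{-1} = 1, s_0 = 0,
   s_1 = s_0^{a_1 - 1} s_{-1}, s_n = s_{n-1}^{a_n} s_{n-2} (n >= 2) *)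
Fixpoint sw_pair (alpha : R) (n : nat) : list nat * list nat :=
  match n with
  | O => (0%nat :: nil, wpow (0%nat :: nil) (cf_a alpha 1 - 1) ++ 1%nat :: nil)
  | S k => let p := sw_pair alpha k in
           (snd p, wpow (snd p) (cf_a alpha (S (S k))) ++ fst p)
  end.

Definition s (alpha : R) (n : nat) : list nat := fst (sw_pair alpha n).

Definition v (alpha theta : R) (n : Z) : nat :=
  let f := frac_part (IZR n * alpha + theta) in
  if Rle_dec (1 - alpha) f then (if Rlt_dec f 1 then 1%nat else 0%nat) else 0%nat.

Definition inW (alpha : R) (w : list nat) : Prop :=
  w <> nil /\
  exists theta : R, 0 <= theta < 1 /\
  exists m : Z, w = map (fun i : nat => v alpha theta (m + Z.of_nat i)%Z) (seq 0 (length w)).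

Definition is_suffix (x u : list nat) : Prop := exists z, u = z ++ x.
Definition is_prefix (y u : list nat) : Prop := exists z, u = y ++ z.

(* Main.v *)
Require Import Defs.
From Stdlib Require Import Reals ZArith List Lia Lra.
Open Scope R_scope.
Import ListNotations.

Definition factor (w u : list nat) : Prop := exists l r, u = l ++ w ++ r.

Lemma factor_app (A B l w r : list nat) : A ++ B = l ++ w ++ r ->
  factor w A \/ factor w B \/ exists x y, w = x ++ y /\ is_suffix x A /\ is_prefix y B.
Proof.
  intro H. destruct (app_eq_app _ _ _ _ H) as [m [[H1 H2]|[H1 H2]]].
  - symmetry in H2. destruct (app_eq_app _ _ _ _ H2) as [m' [[H3 H4]|[H3 H4]]].
    + left. exists l, m'. subst. reflexivity.
    + right; right. exists m, m'. split; [exact H3|]. split.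
      * exists l; exact H1.
      * exists r; exact H4.
  - right; left. exists m, r. exact H2.
Qed.

Lemma prefix_trans (a b c : list nat) : is_prefix a b -> is_prefix b c -> is_prefix a c.
Proof. intros [z1 H1] [z2 H2]. exists (z1 ++ z2). subst. rewrite app_assoc. reflexivity. Qed.

Lemma wpow_S (u : list nat) n : wpow u (S n) = u ++ wpow u n.
Proof. reflexivity. Qed.

Lemma wpow_prefix_step (u z : list nat) : is_prefix z u -> forall A,
  is_prefix (wpow u A ++ z) (wpow u (S A) ++ z).
Proof.
  intros [q Hq] A. induction A as [|A IH].
  - unfold wpow; simpl. exists (q ++ z). rewrite Hq. rewrite ?app_nil_r, <- ?app_assoc. reflexivity.
  - destruct IH as [q' Hq']. exists q'. change (wpow u (S (S A))) with (u ++ wpow u (S A)).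
    change (wpow u (S A)) with (u ++ wpow u A) at 2.
    rewrite <- !app_assoc. rewrite Hq'. rewrite <- !app_assoc. reflexivity.
Qed.

Lemma factor_wpow (u z : list nat) : is_prefix z u -> forall A w, factor w (wpow u A ++ z) ->
  factor w u \/ factor w z \/ exists x y, w = x ++ y /\ is_suffix x u /\ is_prefix y (wpow u A ++ z).
Proof.
  intros Hz A. induction A as [|A IH]; intros w [l [r H]].
  - right; left. exists l, r. exact H.
  - rewrite wpow_S, <- app_assoc in H.
    destruct (factor_app _ _ _ _ _ H) as [F|[F|[x [y [E [Sx P]]]]]].
    + left; exact F.
    + destruct (IH w F) as [F'|[F'|[x [y [E [Sx P]]]]]].
      * left; exact F'.
      * right; left; exact F'.
      * right; right. exists x, y. repeat split; auto.
        eapply prefix_trans; [exact P|]. apply wpow_prefix_step; auto.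
    + right; right. exists x, y. repeat split; auto.
      eapply prefix_trans; [exact P|]. apply wpow_prefix_step; auto.
Qed.

Lemma all_eq_repeat (c : nat) (w : list nat) : (forall x, In x w -> x = c) -> w = repeat c (length w).
Proof.
  induction w as [|x w IH]; intro H; simpl; auto.
  rewrite (H x (or_introl eq_refl)). f_equal. apply IH. intros y Hy; apply H; right; auto.
Qed.

Lemma repeat_prefix (c : nat) i k : (i <= k)%nat -> is_prefix (repeat c i) (repeat c k).
Proof.
  intro H. exists (repeat c (k - i)). rewrite <- repeat_app. f_equal. lia.
Qed.

Lemma factor_repeat_last (c d k : nat) w : factor w (repeat c k ++ [d]) ->
  is_prefix w (repeat c k ++ [d]) \/ is_suffix w (repeat c k ++ [d]).
Proof.
  intros [l [r H]]. destruct r as [|r0 r] using rev_ind.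
  - right. exists l. rewrite app_nil_r in H. exact H.
  - left. rewrite !app_assoc in H. apply app_inj_tail in H. destruct H as [H1 H2].
    assert (Hw : w = repeat c (length w)).
    { apply all_eq_repeat. intros x Hx. apply (repeat_spec k). rewrite H1.
      apply in_or_app; left; apply in_or_app; right; auto. }
    assert (Hl : (length w <= k)%nat).
    { assert (length (repeat c k) = length (l ++ w ++ r)) by (rewrite <- app_assoc in H1; rewrite H1; reflexivity).
      rewrite repeat_length in H. rewrite !length_app in H. lia. }
    eapply prefix_trans. rewrite Hw. apply (repeat_prefix c _ _ Hl). exists [d]. reflexivity.
Qed.

Definition Pw (alpha : R) (w : list nat) : Prop :=
  exists t : nat, (1 <= t)%nat /\
    exists x y : list nat,
      (is_suffix x (s alpha t) \/ is_suffix x (s alpha (t - 1))) /\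
      is_prefix y (s alpha (t + 1)) /\ w = x ++ y.

Lemma Pw_suffix alpha t w : (1 <= t)%nat -> is_suffix w (s alpha t) -> Pw alpha w.
Proof. intros Ht H. exists t; split; auto. exists w, []. split; [left; auto|]. split.
  exists (s alpha (t+1)); reflexivity. rewrite app_nil_r; reflexivity. Qed.

Lemma Pw_suffix' alpha t w : (1 <= t)%nat -> is_suffix w (s alpha (t-1)) -> Pw alpha w.
Proof. intros Ht H. exists t; split; auto. exists w, []. split; [right; auto|]. split.
  exists (s alpha (t+1)); reflexivity. rewrite app_nil_r; reflexivity. Qed.

Lemma Pw_prefix alpha t w : (1 <= t)%nat -> is_prefix w (s alpha (t+1)) -> Pw alpha w.
Proof. intros Ht H. exists t; split; auto. exists [], w. split; [left; exists (s alpha t); rewrite app_nil_r; reflexivity|]. split; auto. Qed.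

Lemma s_0 alpha : s alpha 0 = [0%nat].
Proof. reflexivity. Qed.

Lemma wpow_0 n : wpow [0%nat] n = repeat 0%nat n.
Proof. induction n; simpl; auto. unfold wpow in *; simpl. rewrite IHn. reflexivity. Qed.

Lemma s_1 alpha : s alpha 1 = repeat 0%nat (cf_a alpha 1 - 1) ++ [1%nat].
Proof. unfold s; simpl. rewrite wpow_0. reflexivity. Qed.

Lemma s_SS alpha k : s alpha (S (S k)) = wpow (s alpha (S k)) (cf_a alpha (S (S k))) ++ s alpha k.
Proof. unfold s. simpl. reflexivity. Qed.

Lemma wpow_pos_prefix (u z : list nat) n : (1 <= n)%nat -> is_prefix u (wpow u n ++ z).
Proof. intro H. destruct n; [lia|]. exists (wpow u n ++ z). rewrite wpow_S, app_assoc. reflexivity. Qed.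

Lemma lemmaB alpha : (forall k, (1 <= cf_a alpha (S k))%nat) ->
  forall n w, factor w (s alpha n) -> Pw alpha w.
Proof.
  intro Hpos.
  assert (H1 : forall w, factor w (s alpha 1) -> Pw alpha w).
  { intros w F. rewrite s_1 in F. destruct (factor_repeat_last _ _ _ _ F) as [P|Sx].
    - apply (Pw_prefix alpha 1); auto. apply prefix_trans with (b := s alpha 1). rewrite s_1; exact P.
      simpl. rewrite s_SS. apply wpow_pos_prefix. apply Hpos.
    - apply (Pw_suffix alpha 1); auto. rewrite s_1; auto. }
  assert (H0 : forall w, factor w (s alpha 0) -> Pw alpha w).
  { intros w [l [r F]]. rewrite s_0 in F.
    destruct l as [|? l]; destruct w as [|c w]; simpl in F.
    - apply (Pw_suffix alpha 1); auto. exists (s alpha 1). rewrite app_nil_r; auto.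
    - injection F as E1 E2. destruct w; [|discriminate]. subst.
      apply (Pw_suffix' alpha 1); auto. exists []. reflexivity.
    - apply (Pw_suffix alpha 1); auto. exists (s alpha 1). rewrite app_nil_r; auto.
    - injection F as E1 E2. destruct l; discriminate. }
  assert (Hstep : forall k, (forall w, factor w (s alpha k) -> Pw alpha w) ->
     (forall w, factor w (s alpha (S k)) -> Pw alpha w) ->
     (forall w, factor w (s alpha (S (S k))) -> Pw alpha w)).
  { intros k IH0 IH1 w F.
    assert (Hgen : is_prefix (s alpha k) (s alpha (S k)) -> Pw alpha w).
    { intro Hz. rewrite s_SS in F. destruct (factor_wpow _ _ Hz _ _ F) as [F'|[F'|[x [y [E [Sx P]]]]]].
      - apply IH1; auto.
      - apply IH0; auto.
      - exists (S k). split; [lia|]. exists x, y. split; [left; auto|]. split; auto.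
        replace (S k + 1)%nat with (S (S k)) by lia. rewrite s_SS. exact P. }
    destruct k as [|k].
    - destruct (Nat.eq_dec (cf_a alpha 1) 1) as [Ha|Ha].
      + rewrite s_SS, s_1, Ha, s_0 in F. change (repeat 0%nat (1-1) ++ [1%nat]) with [1%nat] in F.
        assert (E : wpow [1%nat] (cf_a alpha 2) = repeat 1%nat (cf_a alpha 2)).
        { generalize (cf_a alpha 2). induction n; simpl; auto. unfold wpow in *; simpl. rewrite IHn. reflexivity. }
        rewrite E in F. destruct (factor_repeat_last _ _ _ _ F) as [P|Sx].
        * apply (Pw_prefix alpha 1); auto. change (1+1)%nat with 2%nat. rewrite s_SS, s_1, Ha, s_0. change (repeat 0%nat (1-1) ++ [1%nat]) with [1%nat]. rewrite E. exact P.
        * apply (Pw_suffix alpha 2); auto. rewrite s_SS, s_1, Ha, s_0. change (repeat 0%nat (1-1) ++ [1%nat]) with [1%nat]. rewrite E. exact Sx.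
      + apply Hgen. rewrite s_1, s_0. assert (1 <= cf_a alpha 1)%nat by apply Hpos.
        destruct (cf_a alpha 1 - 1)%nat as [|m] eqn:Em; [lia|]. simpl.
        exists (repeat 0%nat m ++ [1%nat]). reflexivity.
    - apply Hgen. rewrite (s_SS alpha k). apply wpow_pos_prefix. apply Hpos. }
  assert (Hall : forall n, (forall w, factor w (s alpha n) -> Pw alpha w) /\
                           (forall w, factor w (s alpha (S n)) -> Pw alpha w)).
  { induction n as [|n [IHa IHb]]; split.
    - exact H0. - exact H1. - exact IHb. - exact (Hstep n IHa IHb). }
  intros n w F. apply (proj1 (Hall n)); auto.
Qed.

Definition fl (x : R) : Z := Int_part x.
Definition cl (x : R) : Z := (- fl (- x))%Z.
Definition flb (b : bool) (x : R) : Z := if b then cl x else fl x.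

Lemma fl_spec x : IZR (fl x) <= x < IZR (fl x) + 1.
Proof. unfold fl. destruct (base_Int_part x). lra. Qed.

Lemma Zle_of_R z1 z2 : IZR z1 < IZR z2 + 1 -> (z1 <= z2)%Z.
Proof. intro H. assert (H0 : IZR z1 < IZR (z2+1)) by (rewrite plus_IZR; lra). apply lt_IZR in H0. lia. Qed.

Lemma fl_unique z x : IZR z <= x < IZR z + 1 -> fl x = z.
Proof. intro H. destruct (fl_spec x). apply Z.le_antisymm; apply Zle_of_R; lra. Qed.

Lemma cl_spec x : IZR (cl x) - 1 < x <= IZR (cl x).
Proof. unfold cl. rewrite opp_IZR. destruct (fl_spec (-x)). lra. Qed.

Lemma cl_unique z x : IZR z - 1 < x <= IZR z -> cl x = z.
Proof. intro H. unfold cl. rewrite (fl_unique (-z)). lia. rewrite opp_IZR. lra. Qed.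

Lemma flb_shift b k x : flb b (IZR k + x) = (k + flb b x)%Z.
Proof. destruct b; simpl.
  - apply cl_unique. rewrite plus_IZR. destruct (cl_spec x). lra.
  - apply fl_unique. rewrite plus_IZR. destruct (fl_spec x). lra. Qed.

Definition Wz (b : bool) (al rho : R) (n : Z) : Z :=
  (flb b (IZR (n+1) * al + rho) - flb b (IZR n * al + rho))%Z.
Definition Wd (b : bool) (al rho : R) (n : Z) : nat := Z.to_nat (Wz b al rho n).

Lemma IZR_S_mul n al rho : IZR (n+1) * al + rho = (IZR n * al + rho) + al.
Proof. rewrite plus_IZR. ring. Qed.

Lemma Wz_range b al rho n : 0 <= al < 1 -> (0 <= Wz b al rho n <= 1)%Z.
Proof.
  intro H. unfold Wz. rewrite IZR_S_mul. set (x := IZR n * al + rho).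
  destruct b; simpl.
  - destruct (cl_spec x), (cl_spec (x+al)).
    assert (cl x <= cl (x+al))%Z by (apply Zle_of_R; lra).
    assert (cl (x+al) <= cl x + 1)%Z by (apply Zle_of_R; rewrite plus_IZR; lra). lia.
  - destruct (fl_spec x), (fl_spec (x+al)).
    assert (fl x <= fl (x+al))%Z by (apply Zle_of_R; lra).
    assert (fl (x+al) <= fl x + 1)%Z by (apply Zle_of_R; rewrite plus_IZR; lra). lia.
Qed.

Lemma Wd_le1 b al rho n : 0 <= al < 1 -> (Wd b al rho n <= 1)%nat.
Proof. intro H. unfold Wd. destruct (Wz_range b al rho n H). lia. Qed.

Lemma Wd_Wz b al rho n : 0 <= al < 1 -> Z.of_nat (Wd b al rho n) = Wz b al rho n.
Proof. intro H. unfold Wd. destruct (Wz_range b al rho n H). lia. Qed.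

Definition pos (b : bool) (al rho : R) (j : Z) : Z :=
  if b then fl ((IZR j - rho) / al) else (cl ((IZR j - rho) / al) - 1)%Z.

Lemma mul_lt_pos a b c : 0 < c -> a < b -> a * c < b * c.
Proof. intros. apply Rmult_lt_compat_r; auto. Qed.
Lemma mul_le_pos a b c : 0 < c -> a <= b -> a * c <= b * c.
Proof. intros. apply Rmult_le_compat_r; lra. Qed.
Lemma mul_lt_pos_rev a b c : 0 < c -> a * c < b * c -> a < b.
Proof. intros. apply Rmult_lt_reg_r with c; auto. Qed.
Lemma mul_le_pos_rev a b c : 0 < c -> a * c <= b * c -> a <= b.
Proof. intros. apply Rmult_le_reg_r with c; auto. Qed.

Lemma F1 b al rho j : 0 < al < 1 -> Wz b al rho (pos b al rho j) = 1%Z.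
Proof.
  intro Ha. unfold Wz, pos. set (y := (IZR j - rho) / al).
  assert (Hy : y * al = IZR j - rho) by (unfold y; field; lra).
  destruct b; simpl.
  - destruct (fl_spec y) as [H1 H2]. set (n := fl y) in *.
    pose proof (mul_le_pos _ _ _ (proj1 Ha) H1). pose proof (mul_lt_pos _ _ _ (proj1 Ha) H2).
    rewrite IZR_S_mul.
    rewrite (cl_unique j (IZR n * al + rho)), (cl_unique (j+1) (IZR n * al + rho + al)); [lia| |]; rewrite ?plus_IZR; lra.
  - destruct (cl_spec y) as [H1 H2]. set (c := cl y) in *.
    assert (E : IZR (c - 1 + 1) = IZR c) by (f_equal; lia).
    rewrite E. rewrite minus_IZR in *.
    pose proof (mul_lt_pos _ _ _ (proj1 Ha) H1). pose proof (mul_le_pos _ _ _ (proj1 Ha) H2).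
    rewrite (fl_unique j (IZR c * al + rho)), (fl_unique (j-1) ((IZR c - 1) * al + rho)); [lia| |]; rewrite ?minus_IZR; lra.
Qed.

Lemma F2 b al rho n : 0 < al < 1 -> Wz b al rho n = 1%Z -> exists j, pos b al rho j = n.
Proof.
  intros Ha HW. unfold Wz in HW. rewrite IZR_S_mul in HW. set (x := IZR n * al + rho) in *.
  destruct b; simpl in HW.
  - exists (cl x). unfold pos. set (y := (IZR (cl x) - rho) / al).
    assert (Hy : y * al = IZR (cl x) - rho) by (unfold y; field; lra).
    destruct (cl_spec x), (cl_spec (x + al)).
    assert (E : cl (x + al) = (cl x + 1)%Z) by lia. rewrite E, plus_IZR in *.
    apply fl_unique. split.
    + apply (mul_le_pos_rev _ _ al); [lra|]. unfold x in *. lra.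
    + apply (mul_lt_pos_rev _ _ al); [lra|]. unfold x in *. lra.
  - exists (fl (x + al)). unfold pos. set (y := (IZR (fl (x+al)) - rho) / al).
    assert (Hy : y * al = IZR (fl (x+al)) - rho) by (unfold y; field; lra).
    destruct (fl_spec x), (fl_spec (x + al)).
    assert (E : fl (x + al) = (fl x + 1)%Z) by lia. rewrite E, plus_IZR in *.
    assert (cl y = n + 1)%Z; [|lia].
    apply cl_unique. rewrite plus_IZR. split.
    + apply (mul_lt_pos_rev _ _ al); [lra|]. unfold x in *. lra.
    + apply (mul_le_pos_rev _ _ al); [lra|]. unfold x in *. lra.
Qed.

Lemma pos_formula b al rho j : 0 < al ->
  pos b al rho j = (j * fl (/al) + flb (negb b) (IZR j * frac_part (/al) + - rho / al)
                    - (if b then 0 else 1))%Z.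
Proof.
  intro Ha. unfold pos.
  assert (E : (IZR j - rho) / al = IZR (j * fl (/al)) + (IZR j * frac_part (/al) + - rho / al)).
  { unfold frac_part. fold (fl (/al)). rewrite mult_IZR. field. lra. }
  rewrite E. destruct b.
  - pose proof (flb_shift false (j * fl (/al)) (IZR j * frac_part (/al) + - rho / al)). simpl in *. lia.
  - pose proof (flb_shift true (j * fl (/al)) (IZR j * frac_part (/al) + - rho / al)). simpl in *. lia.
Qed.

Lemma F3 b al rho j : 0 < al ->
  pos b al rho (j+1) = (pos b al rho j + fl (/al) + Wz (negb b) (frac_part (/al)) (- rho / al) j)%Z.
Proof.
  intro Ha. rewrite !pos_formula by auto. unfold Wz. lia.
Qed.

Lemma frac_range x : 0 <= frac_part x < 1.
Proof. unfold frac_part. fold (fl x). destruct (fl_spec x). lra. Qed.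

Lemma aZ_ge1 al : 0 < al < 1 -> (1 <= fl (/al))%Z.
Proof.
  intro Ha. assert (1 < / al). { rewrite <- Rinv_1. apply Rinv_lt_contravar; lra. }
  destruct (fl_spec (/al)). apply Zle_of_R. lra.
Qed.

Lemma pos_step b al rho j : 0 < al < 1 -> (pos b al rho j + fl (/al) <= pos b al rho (j+1))%Z.
Proof.
  intro Ha. rewrite F3 by lra. destruct (Wz_range (negb b) (frac_part (/al)) (- rho / al) j (frac_range _)). lia.
Qed.

Lemma pos_mono b al rho j1 j2 : 0 < al < 1 -> (j1 < j2)%Z -> (pos b al rho j1 < pos b al rho j2)%Z.
Proof.
  intros Ha Hj. assert (forall k : nat, (pos b al rho j1 < pos b al rho (j1 + Z.of_nat (S k)))%Z).
  { induction k as [|k IH].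
    - pose proof (pos_step b al rho j1 Ha). pose proof (aZ_ge1 al Ha). simpl. lia.
    - pose proof (pos_step b al rho (j1 + Z.of_nat (S k)) Ha). pose proof (aZ_ge1 al Ha).
      replace (j1 + Z.of_nat (S (S k)))%Z with (j1 + Z.of_nat (S k) + 1)%Z by lia. lia. }
  specialize (H (Z.to_nat (j2 - j1 - 1))). replace (j1 + Z.of_nat (S (Z.to_nat (j2 - j1 - 1))))%Z with j2 in H by lia.
  exact H.
Qed.

Lemma zero_between b al rho j n : 0 < al < 1 ->
  (pos b al rho j < n < pos b al rho (j+1))%Z -> Wd b al rho n = 0%nat.
Proof.
  intros Ha Hn. destruct (Wz_range b al rho n ltac:(lra)).
  destruct (Z.eq_dec (Wz b al rho n) 1) as [E|E].
  - exfalso. destruct (F2 b al rho n Ha E) as [j' Hj']. subst n.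
    destruct (Z.lt_ge_cases j j') as [H1|H1].
    + destruct (Z.lt_ge_cases j' (j+1)) as [H2|H2]; [lia|].
      destruct (Z.eq_dec j' (j+1)); [subst; lia|].
      pose proof (pos_mono b al rho (j+1) j' Ha ltac:(lia)). lia.
    + destruct (Z.eq_dec j' j); [subst; lia|].
      pose proof (pos_mono b al rho j' j Ha ltac:(lia)). lia.
  - unfold Wd. lia.
Qed.

Definition fword (f : Z -> nat) (m : Z) (L : nat) : list nat :=
  map (fun i => f (m + Z.of_nat i)%Z) (seq 0 L).
Definition Phi (h : nat -> list nat) (u : list nat) : list nat := flat_map h u.
Definition Decomp (f g : Z -> nat) (h : nat -> list nat) (N : Z -> Z) : Prop :=
  forall j, N (j+1)%Z = (N j + Z.of_nat (length (h (g j))))%Z /\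
            fword f (N j) (length (h (g j))) = h (g j).
Definition phi (a x : nat) : list nat := repeat 0%nat (a-1) ++ 1%nat :: repeat 0%nat x.

Lemma fword_length f m L : length (fword f m L) = L.
Proof. unfold fword. rewrite length_map, length_seq. reflexivity. Qed.

Lemma fword_nth f m L i d : (i < L)%nat -> nth i (fword f m L) d = f (m + Z.of_nat i)%Z.
Proof.
  intro H. unfold fword. set (F := fun i => f (m + Z.of_nat i)%Z).
  transitivity (nth i (map F (seq 0 L)) (F 0%nat)).
  { apply nth_indep. rewrite length_map, length_seq; auto. }
  rewrite map_nth, seq_nth by auto. reflexivity.
Qed.

Lemma nth_phi a x i : nth i (phi a x) 0%nat =
  if (i <? a - 1)%nat then 0%nat else if (i =? a - 1)%nat then 1%nat else 0%nat.
Proof.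
  unfold phi. destruct (Nat.ltb_spec i (a-1)).
  - rewrite app_nth1 by (rewrite repeat_length; auto). apply nth_repeat.
  - rewrite app_nth2 by (rewrite repeat_length; auto). rewrite repeat_length.
    destruct (Nat.eqb_spec i (a-1)).
    + subst. rewrite Nat.sub_diag. reflexivity.
    + destruct (i - (a-1))%nat eqn:E; [lia|]. simpl. destruct (Nat.lt_ge_cases n0 x).
      * apply nth_repeat.
      * apply nth_overflow. rewrite repeat_length. lia.
Qed.

Lemma phi_length a x : (1 <= a)%nat -> length (phi a x) = (a + x)%nat.
Proof. intro. unfold phi. rewrite length_app, repeat_length. simpl. rewrite repeat_length. lia. Qed.

Lemma decomp_real b al rho : 0 < al < 1 ->
  Decomp (Wd b al rho) (Wd (negb b) (frac_part (/al)) (- rho / al)) (phi (Z.to_nat (fl (/al))))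
         (fun j => (pos b al rho j - (fl (/al) - 1))%Z).
Proof.
  intros Ha j. pose proof (aZ_ge1 al Ha) as HaZ.
  set (aZ := fl (/al)) in *. set (a := Z.to_nat aZ).
  set (g := Wd (negb b) (frac_part (/al)) (- rho / al) j).
  assert (Hg : (g <= 1)%nat) by (apply Wd_le1; apply frac_range).
  assert (HgZ : Z.of_nat g = Wz (negb b) (frac_part (/al)) (- rho / al) j) by (apply Wd_Wz; apply frac_range).
  assert (Hlen : length (phi a g) = (a + g)%nat) by (apply phi_length; unfold a; lia).
  rewrite Hlen. split.
  - rewrite F3 by lra. fold aZ. rewrite Nat2Z.inj_add. unfold a. lia.
  - apply nth_ext with (d := 0%nat) (d' := 0%nat).
    + rewrite fword_length, Hlen. reflexivity.
    + intros i Hi. rewrite fword_length in Hi. rewrite fword_nth by auto. rewrite nth_phi.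
      pose proof (pos_step b al rho (j-1) Ha) as Hprev. replace (j-1+1)%Z with j in Hprev by lia.
      pose proof (F3 b al rho j (proj1 Ha)) as Hnext. fold aZ in Hprev, Hnext. rewrite <- HgZ in Hnext.
      destruct (Nat.ltb_spec i (a-1)).
      * apply (zero_between b al rho (j-1)); auto. replace (j-1+1)%Z with j by lia. unfold a in *. lia.
      * destruct (Nat.eqb_spec i (a-1)).
        -- replace (pos b al rho j - (aZ - 1) + Z.of_nat i)%Z with (pos b al rho j) by (unfold a in *; lia).
           unfold Wd. rewrite F1 by auto. reflexivity.
        -- apply (zero_between b al rho j); auto. unfold a in *. lia.
Qed.

Lemma fword_S f j k : fword f j (S k) = f j :: fword f (j+1) k.
Proof.
  unfold fword. simpl. f_equal. f_equal; lia.
  rewrite <- seq_shift, map_map. apply map_ext. intro i. f_equal. lia.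
Qed.

Lemma fword_app f m L1 L2 : fword f m (L1+L2) = fword f m L1 ++ fword f (m + Z.of_nat L1) L2.
Proof.
  revert m. induction L1 as [|L1 IH]; intro m.
  - simpl. rewrite Z.add_0_r. reflexivity.
  - simpl plus. rewrite !fword_S, IH. simpl. f_equal. f_equal. f_equal. lia.
Qed.

Lemma Phi_cons h x u : Phi h (x :: u) = h x ++ Phi h u.
Proof. reflexivity. Qed.

Lemma blocks f g h N : Decomp f g h N -> forall k j,
  N (j + Z.of_nat k)%Z = (N j + Z.of_nat (length (Phi h (fword g j k))))%Z /\
  fword f (N j) (length (Phi h (fword g j k))) = Phi h (fword g j k).
Proof.
  intros D k. induction k as [|k IH]; intro j.
  - simpl. rewrite !Z.add_0_r. split; reflexivity.
  - rewrite fword_S, Phi_cons, length_app. destruct (D j) as [D1 D2]. destruct (IH (j+1)%Z) as [I1 I2].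
    split.
    + replace (j + Z.of_nat (S k))%Z with (j + 1 + Z.of_nat k)%Z by lia. rewrite I1, D1. lia.
    + rewrite fword_app, D2. f_equal. rewrite <- D1. exact I2.
Qed.

Lemma Phi_app h u v : Phi h (u ++ v) = Phi h u ++ Phi h v.
Proof. apply flat_map_app. Qed.

Lemma Phi_comp h h' u : Phi (fun x => Phi h (h' x)) u = Phi h (Phi h' u).
Proof. induction u as [|x u IH]; simpl; auto. rewrite IH. unfold Phi. rewrite flat_map_app. reflexivity. Qed.

Lemma compose f g e h h' N N' : Decomp f g h N -> Decomp g e h' N' ->
  Decomp f e (fun x => Phi h (h' x)) (fun i => N (N' i)).
Proof.
  intros D D' i. destruct (D' i) as [E1 E2].
  destruct (blocks f g h N D (length (h' (e i))) (N' i)) as [B1 B2].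
  rewrite E2 in B1, B2. split.
  - rewrite E1. exact B1.
  - exact B2.
Qed.

Lemma locate (N : Z -> Z) : (forall j, (N j < N (j+1))%Z) -> forall m, exists j, (N j <= m < N (j+1))%Z.
Proof.
  intros Hinc m.
  assert (Up : forall k : nat, (N 0 + Z.of_nat k <= N (Z.of_nat k))%Z).
  { induction k; [simpl; lia|]. specialize (Hinc (Z.of_nat k)). rewrite Nat2Z.inj_succ.
    replace (Z.succ (Z.of_nat k)) with (Z.of_nat k + 1)%Z by lia. lia. }
  assert (Down : forall k : nat, (N (- Z.of_nat k) <= N 0 - Z.of_nat k)%Z).
  { induction k; [simpl; lia|]. specialize (Hinc (- Z.of_nat (S k))%Z).
    replace (- Z.of_nat (S k) + 1)%Z with (- Z.of_nat k)%Z in Hinc by lia. lia. }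
  assert (Fw : forall k : nat, forall m, (N 0 <= m < N (Z.of_nat k))%Z -> exists j, (N j <= m < N (j+1))%Z).
  { induction k as [|k IH]; intros m' Hm; [simpl in Hm; lia|].
    destruct (Z.lt_ge_cases m' (N (Z.of_nat k))).
    - apply IH. lia.
    - exists (Z.of_nat k). replace (Z.of_nat k + 1)%Z with (Z.of_nat (S k)) by lia. lia. }
  assert (Bw : forall k : nat, forall m, (N (- Z.of_nat k) <= m < N 0)%Z -> exists j, (N j <= m < N (j+1))%Z).
  { induction k as [|k IH]; intros m' Hm; [simpl in Hm; lia|].
    destruct (Z.lt_ge_cases m' (N (- Z.of_nat k)%Z)).
    - exists (- Z.of_nat (S k))%Z. replace (- Z.of_nat (S k) + 1)%Z with (- Z.of_nat k)%Z by lia. lia.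
    - apply IH. lia. }
  destruct (Z.lt_ge_cases m (N 0%Z)).
  - apply (Bw (Z.to_nat (N 0%Z - m))). split; [|lia]. specialize (Down (Z.to_nat (N 0%Z - m))). lia.
  - apply (Fw (Z.to_nat (m - N 0%Z + 1))). split; [lia|]. specialize (Up (Z.to_nat (m - N 0%Z + 1))). lia.
Qed.

Lemma cover2 f g h N : Decomp f g h N -> (forall x, (2 <= length (h x))%nat) ->
  forall m L, (1 <= L)%nat -> exists j k, factor (fword f m L) (Phi h (fword g j k)) /\ (2 * k <= L + 2)%nat.
Proof.
  intros D Hh m L HL.
  assert (Hinc : forall j, (N j + 2 <= N (j+1))%Z).
  { intro j. destruct (D j) as [D1 _]. specialize (Hh (g j)). lia. }
  assert (Hmon : forall j (k : nat), (N j + 2 * Z.of_nat k <= N (j + Z.of_nat k))%Z).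
  { intros j k. induction k; [simpl; rewrite !Z.add_0_r; lia|].
    specialize (Hinc (j + Z.of_nat k)%Z). replace (j + Z.of_nat (S k))%Z with (j + Z.of_nat k + 1)%Z by lia. lia. }
  assert (Hinc' : forall j, (N j < N (j+1))%Z) by (intro j; specialize (Hinc j); lia).
  destruct (locate N Hinc' m) as [j1 Hj1].
  destruct (locate N Hinc' (m + Z.of_nat L - 1)%Z) as [j2 Hj2].
  assert (Hle : (j1 <= j2)%Z).
  { destruct (Z.le_gt_cases j1 j2); auto. specialize (Hmon (j2+1)%Z (Z.to_nat (j1 - j2 - 1))).
    replace (j2 + 1 + Z.of_nat (Z.to_nat (j1 - j2 - 1)))%Z with j1 in Hmon by lia. lia. }
  set (k := Z.to_nat (j2 - j1 + 1)).
  exists j1, k. destruct (blocks f g h N D k j1) as [B1 B2].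
  replace (j1 + Z.of_nat k)%Z with (j2 + 1)%Z in B1 by (unfold k; lia).
  set (Bl := Phi h (fword g j1 k)) in *. split.
  - rewrite <- B2.
    set (p := Z.to_nat (m - N j1)). set (q := Z.to_nat (N (j2+1)%Z - (m + Z.of_nat L))%Z).
    assert (E : length Bl = (p + (L + q))%nat) by (unfold p, q; lia).
    rewrite E, fword_app, fword_app. exists (fword f (N j1) p), (fword f (N j1 + Z.of_nat p + Z.of_nat L) q).
    replace (N j1 + Z.of_nat p)%Z with m by (unfold p; lia). reflexivity.
  - destruct (Z.eq_dec j1 j2).
    + unfold k. subst. replace (j2 - j2 + 1)%Z with 1%Z by lia. simpl. lia.
    + specialize (Hmon (j1+1)%Z (Z.to_nat (j2 - j1 - 1))).
      replace (j1 + 1 + Z.of_nat (Z.to_nat (j2 - j1 - 1)))%Z with j2 in Hmon by lia. unfold k. lia.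
Qed.

Lemma irr_step x : 0 < x < 1 -> irrational x ->
  0 < frac_part (/x) < 1 /\ irrational (frac_part (/x)).
Proof.
  intros Hx Hirr. pose proof (frac_range (/x)) as Hf.
  pose proof (aZ_ge1 x Hx) as Hn.
  assert (E : frac_part (/x) = /x - IZR (fl (/x))) by reflexivity.
  assert (Hxpos : 0 < /x) by (apply Rinv_0_lt_compat; lra).
  split; [split; [|lra]|].
  - destruct (Rle_lt_or_eq_dec 0 (frac_part (/x)) (proj1 Hf)) as [H|H]; auto.
    exfalso. apply Hirr. exists 1%Z, (fl (/x)). split; [lia|].
    assert (IZR (fl (/x)) = /x) by lra. rewrite H0. field. lra.
  - intros [p [q [Hq Hpq]]]. apply Hirr.
    exists q, (fl (/x) * q + p)%Z.
    assert (Hq' : IZR q <> 0) by (apply not_0_IZR; auto).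
    assert (Hinv : /x = IZR (fl (/x) * q + p) / IZR q).
    { rewrite plus_IZR, mult_IZR. rewrite E in Hpq.
      transitivity (IZR (fl (/x)) + IZR p / IZR q); [lra| field; auto]. }
    assert (Hne : IZR (fl (/x) * q + p) <> 0).
    { intro H0. rewrite H0 in Hinv. unfold Rdiv in Hinv. rewrite Rmult_0_l in Hinv. lra. }
    split.
    + intro H0. apply Hne. rewrite H0. reflexivity.
    + set (n := fl (/x)) in *. transitivity (/ (/ x)); [rewrite Rinv_inv; reflexivity|]. rewrite Hinv. field. split; auto.
Qed.

Lemma cf_rem_shift alpha k : cf_rem (cf_rem alpha 1) k = cf_rem alpha (S k).
Proof. induction k; simpl in *; auto. rewrite IHk. reflexivity. Qed.

Lemma cf_a_shift alpha k : cf_a (cf_rem alpha 1) (S k) = cf_a alpha (S (S k)).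
Proof. unfold cf_a. rewrite cf_rem_shift. reflexivity. Qed.

Lemma cf_rem_range alpha : 0 < alpha < 1 -> irrational alpha ->
  forall k, 0 < cf_rem alpha k < 1 /\ irrational (cf_rem alpha k).
Proof.
  intros Ha Hi k. induction k as [|k [IH1 IH2]]; simpl; auto.
  apply irr_step; auto.
Qed.

Lemma cf_a_pos alpha : 0 < alpha < 1 -> irrational alpha -> forall k, (1 <= cf_a alpha (S k))%nat.
Proof.
  intros Ha Hi k. destruct (cf_rem_range alpha Ha Hi k) as [H1 _].
  pose proof (aZ_ge1 _ H1). unfold cf_a. unfold fl in H. lia.
Qed.

Lemma Phi_wpow h u n : Phi h (wpow u n) = wpow (Phi h u) n.
Proof. induction n; simpl; auto. rewrite wpow_S, Phi_app, IHn. reflexivity. Qed.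

Lemma sw0 alpha : sw_pair alpha 0 = ([0%nat], wpow [0%nat] (cf_a alpha 1 - 1) ++ [1%nat]).
Proof. reflexivity. Qed.
Lemma swS alpha k : sw_pair alpha (S k) =
  (snd (sw_pair alpha k), wpow (snd (sw_pair alpha k)) (cf_a alpha (S (S k))) ++ fst (sw_pair alpha k)).
Proof. reflexivity. Qed.

Lemma wpow_snoc (X : list nat) c : wpow X (S c) = wpow X c ++ X.
Proof. induction c; [unfold wpow; simpl; rewrite app_nil_r; reflexivity|].
  rewrite wpow_S, IHc, app_assoc, <- wpow_S, <- IHc. reflexivity. Qed.

Lemma s_rel alpha : (1 <= cf_a alpha 2)%nat -> forall k,
  Phi (phi (cf_a alpha 1)) (fst (sw_pair (cf_rem alpha 1) k)) = fst (sw_pair alpha (S k)) /\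
  Phi (phi (cf_a alpha 1)) (snd (sw_pair (cf_rem alpha 1) k)) = snd (sw_pair alpha (S k)).
Proof.
  intros H2 k. induction k as [|k [IH1 IH2]].
  - rewrite swS, !sw0. cbn [fst snd]. rewrite (cf_a_shift alpha 0). split.
    + unfold Phi. simpl. rewrite app_nil_r, wpow_0. reflexivity.
    + rewrite Phi_app, Phi_wpow, wpow_0.
      set (A := cf_a alpha 1). set (X := repeat 0%nat (A - 1) ++ [1%nat]).
      assert (E0 : Phi (phi A) [0%nat] = X) by (unfold Phi, phi, X; simpl; rewrite app_nil_r; reflexivity).
      assert (E1 : Phi (phi A) [1%nat] = X ++ [0%nat]) by (unfold Phi, phi, X; simpl; rewrite app_nil_r, <- app_assoc; reflexivity).
      rewrite E0, E1. destruct (cf_a alpha 2) as [|c] eqn:Ec; [lia|].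
      replace (S c - 1)%nat with c by lia. rewrite wpow_snoc, app_assoc. reflexivity.
  - rewrite (swS alpha (S k)), (swS (cf_rem alpha 1) k).
    cbn [fst snd]. split.
    + exact IH2.
    + rewrite Phi_app, Phi_wpow, IH1, IH2. rewrite (cf_a_shift alpha (S k)). reflexivity.
Qed.

Lemma Wd0 b al rho n : 0 <= al < 1 -> Wd b al rho n = 0%nat -> Wz b al rho n = 0%Z.
Proof. intros H E. pose proof (Wd_Wz b al rho n H). rewrite E in H0. simpl in H0. lia. Qed.
Lemma Wd1 b al rho n : 0 <= al < 1 -> Wd b al rho n = 1%nat -> Wz b al rho n = 1%Z.
Proof. intros H E. pose proof (Wd_Wz b al rho n H). rewrite E in H0. simpl in H0. lia. Qed.

Lemma Wz_two b al rho m : (Wz b al rho m + Wz b al rho (m+1))%Z =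
  (flb b (IZR m * al + rho + 2 * al) - flb b (IZR m * al + rho))%Z.
Proof.
  unfold Wz. rewrite !IZR_S_mul. replace (IZR m * al + rho + al + al) with (IZR m * al + rho + 2 * al) by ring. lia.
Qed.

Lemma pair_small b al rho m : 0 < al < 1 -> Wd b al rho m = 0%nat -> Wd b al rho (m+1) = 0%nat -> 2 * al < 1.
Proof.
  intros Ha H1 H2. apply Wd0 in H1; [|lra]. apply Wd0 in H2; [|lra].
  pose proof (Wz_two b al rho m) as E. rewrite H1, H2 in E. set (x := IZR m * al + rho) in *.
  destruct b; simpl in E.
  - destruct (cl_spec x), (cl_spec (x + 2 * al)). assert (IZR (cl (x + 2*al)) = IZR (cl x)) by (f_equal; lia). lra.
  - destruct (fl_spec x), (fl_spec (x + 2 * al)). assert (IZR (fl (x + 2*al)) = IZR (fl x)) by (f_equal; lia). lra.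
Qed.

Lemma pair_big b al rho m : 0 < al < 1 -> Wd b al rho m = 1%nat -> Wd b al rho (m+1) = 1%nat -> 1 < 2 * al.
Proof.
  intros Ha H1 H2. apply Wd1 in H1; [|lra]. apply Wd1 in H2; [|lra].
  pose proof (Wz_two b al rho m) as E. rewrite H1, H2 in E. set (x := IZR m * al + rho) in *.
  destruct b; simpl in E.
  - destruct (cl_spec x), (cl_spec (x + 2 * al)). assert (IZR (cl (x + 2*al)) = IZR (cl x + 2)) by (f_equal; lia). rewrite plus_IZR in *. lra.
  - destruct (fl_spec x), (fl_spec (x + 2 * al)). assert (IZR (fl (x + 2*al)) = IZR (fl x + 2)) by (f_equal; lia). rewrite plus_IZR in *. lra.
Qed.

Lemma a_ge2 al : 0 < al -> 2 * al < 1 -> (2 <= cf_a al 1)%nat.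
Proof.
  intros H0 H. assert (2 < /al).
  { apply (mul_lt_pos_rev _ _ al); auto. rewrite Rinv_l by lra. lra. }
  destruct (fl_spec (/al)). assert (2 <= fl (/al))%Z by (apply Zle_of_R; simpl; lra).
  change (cf_a al 1) with (Z.to_nat (fl (/al))). lia.
Qed.

Lemma a_eq1 al : 0 < al < 1 -> 1 < 2 * al -> cf_a al 1 = 1%nat.
Proof.
  intros H0 H. assert (/al < 2).
  { apply (mul_lt_pos_rev _ _ al); [lra|]. rewrite Rinv_l by lra. lra. }
  destruct (fl_spec (/al)). assert (fl (/al) <= 1)%Z by (apply Zle_of_R; simpl; lra).
  pose proof (aZ_ge1 al H0). change (cf_a al 1) with (Z.to_nat (fl (/al))). lia.
Qed.

Lemma junction al k X c d Y : (1 <= cf_a al (S (S k)))%nat ->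
  s al (S k) = X ++ [c] -> s al k = d :: Y -> factor [c; d] (s al (S (S k))).
Proof.
  intros HA H1 H2. rewrite s_SS. destruct (cf_a al (S (S k))) as [|c'] eqn:E; [lia|].
  rewrite wpow_snoc. rewrite H2. rewrite H1 at 2.
  exists (wpow (s al (S k)) c' ++ X), Y. rewrite <- !app_assoc. reflexivity.
Qed.

Lemma factor_Phi h u v : factor u v -> factor (Phi h u) (Phi h v).
Proof. intros [l [r E]]. subst. exists (Phi h l), (Phi h r). rewrite !Phi_app. reflexivity. Qed.

Lemma factor_trans u v w : factor u v -> factor v w -> factor u w.
Proof. intros [l [r E]] [l' [r' E']]. subst. exists (l' ++ l), (r ++ r'). rewrite <- !app_assoc. reflexivity. Qed.

Lemma base2 al b rho m : 0 < al < 1 -> irrational al ->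
  exists n, factor (fword (Wd b al rho) m 2) (s al n).
Proof.
  intros Ha Hi. pose proof (cf_a_pos al Ha Hi) as Hpos.
  rewrite !fword_S. unfold fword; simpl seq; simpl map.
  replace (m + 1 + Z.of_nat 0)%Z with (m+1)%Z by lia.
  pose proof (Wd_le1 b al rho m ltac:(lra)). pose proof (Wd_le1 b al rho (m+1) ltac:(lra)).
  destruct (Wd b al rho m) as [|[|]] eqn:E1; [| |lia]; destruct (Wd b al rho (m+1)) as [|[|]] eqn:E2; try lia.
  - (* 00 *) pose proof (a_ge2 al (proj1 Ha) (pair_small b al rho m Ha E1 E2)).
    exists 3%nat. apply (junction al 1 (wpow (s al 1) (cf_a al 2)) 0%nat 0%nat (repeat 0%nat (cf_a al 1 - 2) ++ [1%nat])).
    apply Hpos. rewrite s_SS, s_0. reflexivity.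
    rewrite s_1. destruct (cf_a al 1 - 1)%nat eqn:Ea; [lia|]. replace (cf_a al 1 - 2)%nat with n by lia. reflexivity.
  - (* 01 *) destruct (Nat.eq_dec (cf_a al 1) 1) as [Ea|Ea].
    + exists 3%nat. apply (junction al 1 (wpow (s al 1) (cf_a al 2)) 0%nat 1%nat []).
      apply Hpos. rewrite s_SS, s_0. reflexivity. rewrite s_1, Ea. reflexivity.
    + exists 1%nat. rewrite s_1. pose proof (Hpos 0%nat).
      exists (repeat 0%nat (cf_a al 1 - 2)), []. replace (cf_a al 1 - 1)%nat with (S (cf_a al 1 - 2)) by lia.
      rewrite <- (Nat.add_1_r (cf_a al 1 - 2)), repeat_app. rewrite <- app_assoc. reflexivity.
  - (* 10 *) exists 2%nat. apply (junction al 0 (repeat 0%nat (cf_a al 1 - 1)) 1%nat 0%nat []).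
    apply Hpos. apply s_1. reflexivity.
  - (* 11 *) pose proof (a_eq1 al Ha (pair_big b al rho m Ha E1 E2)) as Ea.
    exists 4%nat. apply (junction al 2 (wpow (s al 2) (cf_a al 3)) 1%nat 1%nat (wpow [1%nat] (cf_a al 2 - 1) ++ [0%nat])).
    apply Hpos. rewrite s_SS, s_1, Ea. reflexivity.
    rewrite s_SS, s_1, s_0, Ea. pose proof (Hpos 1%nat). destruct (cf_a al 2) as [|c] eqn:Ec; [lia|].
    replace (S c - 1)%nat with c by lia. reflexivity.
Qed.

Lemma s_rel_fst al : 0 < al < 1 -> irrational al -> forall n,
  Phi (phi (cf_a al 1)) (s (cf_rem al 1) n) = s al (S n).
Proof. intros Ha Hi n. unfold s. apply (s_rel al (cf_a_pos al Ha Hi 1)). Qed.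

Lemma stepA : forall L al b rho m, 0 < al < 1 -> irrational al ->
  exists n, factor (fword (Wd b al rho) m L) (s al n).
Proof.
  intro L. induction L as [L IH] using (well_founded_induction lt_wf).
  intros al b rho m Ha Hi.
  destruct L as [|[|[|L']]].
  - exists 0%nat. exists (s al 0), []. reflexivity.
  - unfold fword. simpl. pose proof (Wd_le1 b al rho (m + 0) ltac:(lra)).
    destruct (Wd b al rho (m+0)) as [|[|]]; [| |lia].
    + exists 0%nat. exists [], []. reflexivity.
    + exists 1%nat. rewrite s_1. exists (repeat 0%nat (cf_a al 1 - 1)), []. reflexivity.
  - apply base2; auto.
  - set (L := S (S (S L'))).
    destruct (irr_step al Ha Hi) as [Ha1 Hi1].
    set (al1 := frac_part (/al)) in *.
    destruct (irr_step al1 Ha1 Hi1) as [Ha2 Hi2].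
    set (al2 := frac_part (/al1)) in *.
    pose proof (decomp_real b al rho Ha) as D1.
    pose proof (decomp_real (negb b) al1 (- rho / al) Ha1) as D2.
    pose proof (compose _ _ _ _ _ _ _ D1 D2) as C.
    set (a := Z.to_nat (fl (/al))) in *. set (a1 := Z.to_nat (fl (/al1))) in *.
    assert (Hlen : forall x, (2 <= length (Phi (phi a) (phi a1 x)))%nat).
    { intro x. unfold phi at 2. rewrite Phi_app, Phi_cons, !length_app.
      pose proof (aZ_ge1 al Ha). rewrite (phi_length a 1) by (unfold a; lia). unfold a. lia. }
    destruct (cover2 _ _ _ _ C Hlen m L ltac:(unfold L; lia)) as [j [k [F Hk]]].
    assert (Hkl : (k < L)%nat) by (unfold L in *; lia).
    destruct (IH k Hkl al2 (negb (negb b)) (- (- rho / al) / al1) j Ha2 Hi2) as [n Fn].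
    exists (S (S n)). eapply factor_trans; [exact F|].
    rewrite Phi_comp. rewrite <- (s_rel_fst al Ha Hi (S n)).
    apply factor_Phi. change (cf_rem al 1) with al1. rewrite <- (s_rel_fst al1 Ha1 Hi1 n).
    apply factor_Phi. exact Fn.
Qed.

Lemma v_eq al th n : 0 < al < 1 -> v al th n = Wd false al th n.
Proof.
  intro Ha. unfold v, Wd, Wz. simpl flb. rewrite IZR_S_mul. set (x := IZR n * al + th).
  assert (E : frac_part x = x - IZR (fl x)) by reflexivity. rewrite E.
  destruct (fl_spec x).
  destruct (Rle_dec (1 - al) (x - IZR (fl x))).
  - destruct (Rlt_dec (x - IZR (fl x)) 1); [|lra].
    rewrite (fl_unique (fl x + 1) (x + al)). replace (fl x + 1 - fl x)%Z with 1%Z by lia. reflexivity.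
    rewrite plus_IZR. lra.
  - rewrite (fl_unique (fl x) (x + al)). rewrite Z.sub_diag. reflexivity. lra.
Qed.

Theorem lemma2 (alpha : R) (w : list nat) :
  0 < alpha < 1 -> irrational alpha -> inW alpha w ->
  exists t : nat, (1 <= t)%nat /\
    exists x y : list nat,
      (is_suffix x (s alpha t) \/ is_suffix x (s alpha (t - 1))) /\
      is_prefix y (s alpha (t + 1)) /\
      w = x ++ y.
Proof.
  intros Ha Hi [Hne [th [Hth [m Hw]]]].
  assert (Hw' : w = fword (Wd false alpha th) m (length w)).
  { rewrite Hw at 1. unfold fword. apply map_ext. intro i. apply v_eq; auto. }
  destruct (stepA (length w) alpha false th m Ha Hi) as [n F]. rewrite <- Hw' in F.
  exact (lemmaB alpha (cf_a_pos alpha Ha Hi) n w F).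
Qed.
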